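(* In the Setting, it is impossible that $r=\sqrt{K^2-\lambda_2V}$ and $s=-\sqrt{K^2-\lambda_2V}$.
   Context: Setting: $\Gamma$ is a primitive strongly regular graph with parameters $(v,k,\lambda,\mu)$ (a $k$-regular graph on $v$ vertices, any two adjacent vertices having $\lambda$ and any two distinct non-adjacent vertices having $\mu$ common neighbours; primitive means $\Gamma$ and its complement are connected), with spectrum $k^1, r^f, s^g$ where $k>r>s$ and exponents are multiplicities. $C$ is a coclique in $\Gamma$ of size $c=\frac{vs}{s-k}$. A $K$-regular graph on $V$ vertices, neither complete nor edgeless, is a divisible design graph with parameters $(V,K,\lambda_1,\lambda_2;m,n)$ if its vertex set can be partitioned into $m$ canonical classes of size $n$ such that two distinct vertices in the same class have exactly $\lambda_1$ common neighbours and two vertices in different classes have exactly $\lambda_2$ common neighbours; it is proper unless $m=1$, $n=1$ or $\lambda_1=\lambda_2$. It is assumed that the subgraph $\Delta$ induced on $V(\Gamma)\setminus C$ is a proper divisible design graph with parameters $(V,K,\lambda_1,\lambda_2;m,n)$. It is known that the eigenvalues of $\Delta$ other than $K$ lie in $\{\pm\sqrt{K-\lambda_1},\pm\sqrt{K^2-\lambda_2V}\}$, and that the spectrum of $\Delta$ is $(k+s)^1, r^{f-c+1}, (r+s)^{c-1}, s^{g-c}$, with $c<g$. *)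

(* Defs.v *)
From HB Require Import structures.
From mathcomp Require Import all_boot all_order all_algebra.
Set Implicit Arguments. Unset Strict Implicit. Unset Printing Implicit Defensive.
Import Order.TTheory GRing.Theory Num.Theory.

Definition simple_graph (T : finType) (e : rel T) : Prop :=
  symmetric e /\ irreflexive e.

Definition regular (T : finType) (e : rel T) (k : nat) : Prop :=
  forall x : T, #|[set y | e x y]| = k.

Definition ncommon (T : finType) (e : rel T) (x y : T) : nat :=
  #|[set z | e x z && e y z]|.

Definition connected_graph (T : finType) (e : rel T) : Prop :=
  forall x y : T, connect e x y.

Definition compl_rel (T : finType) (e : rel T) : rel T :=
  fun x y => (x != y) && ~~ e x y.

Definition srg (T : finType) (e : rel T) (v k lam mu : nat) : Prop :=
  [/\ simple_graph e, #|T| = v, regular e k,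
      (forall x y, x != y -> e x y -> ncommon e x y = lam) &
      (forall x y, x != y -> ~~ e x y -> ncommon e x y = mu)].

Definition primitive_srg (T : finType) (e : rel T) (v k lam mu : nat) : Prop :=
  [/\ srg e v k lam mu, connected_graph e & connected_graph (compl_rel e)].

Definition coclique (T : finType) (e : rel T) (C : {set T}) : Prop :=
  forall x y, x \in C -> y \in C -> ~~ e x y.

Definition adjmx (R : pzRingType) (T : finType) (e : rel T) : 'M[R]_#|T| :=
  \matrix_(i, j) ((e (enum_val i) (enum_val j))%:R)%R.

Definition del_type (T : finType) (C : {set T}) := {x : T | x \notin C}.
Definition induced_del (T : finType) (e : rel T) (C : {set T}) :
  rel (del_type C) := fun x y => e (val x) (val y).
Arguments induced_del {T} e C _ _.

Definition complete_graph (T : finType) (e : rel T) : Prop :=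
  forall x y : T, x != y -> e x y.
Definition edgeless (T : finType) (e : rel T) : Prop :=
  forall x y : T, ~~ e x y.

Definition ddg (T : finType) (e : rel T) (V K l1 l2 m n : nat) : Prop :=
  [/\ simple_graph e, #|T| = V, regular e K,
      ~ complete_graph e /\ ~ edgeless e &
      exists P : {set {set T}},
        [/\ partition P [set: T], #|P| = m,
            (forall B, B \in P -> #|B| = n) &
            forall x y : T, x != y ->
              (pblock P x = pblock P y -> ncommon e x y = l1) /\
              (pblock P x <> pblock P y -> ncommon e x y = l2)]].

Definition proper_ddg (T : finType) (e : rel T) (V K l1 l2 m n : nat) : Prop :=
  [/\ ddg e V K l1 l2 m n, m <> 1%N, n <> 1%N & l1 <> l2].

(* Main.v *)
Require Import Defs.
From HB Require Import structures.
From mathcomp Require Import all_boot all_order all_algebra.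
From mathcomp Require Import zify ring lra.
Import Order.TTheory GRing.Theory Num.Theory.
Local Open Scope ring_scope.
Set Implicit Arguments. Unset Strict Implicit. Unset Printing Implicit Defensive.

Section G.
Variable R : rcfType.
Variable T : finType.
Variable e : rel T.

Lemma sum_ev (F : T -> R) : \sum_(i < #|T|) F (enum_val i) = \sum_x F x.
Proof. by rewrite [RHS](reindex _ (onW_bij _ (@enum_val_bij T))). Qed.

Lemma sum_card (P : pred T) : \sum_x ((P x)%:R : R) = #|P|%:R.
Proof.
rewrite -sum1_card natr_sum [in RHS]big_mkcond /=; apply: eq_bigr => x _.
by rewrite -[x \in P]/(P x); case: (P x).
Qed.

Hypothesis esym : symmetric e.
Hypothesis eirr : irreflexive e.

Lemma adjE i j : adjmx R e i j = (e (enum_val i) (enum_val j))%:R.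
Proof. by rewrite mxE. Qed.

Lemma card_nb x : #|[set y | e x y]| = #|[pred y | e x y]|.
Proof. by rewrite cardsE. Qed.

Lemma adj_col k : regular e k ->
  adjmx R e *m const_mx 1 = k%:R *: (const_mx 1 : 'cV[R]_#|T|).
Proof.
move=> reg; apply/matrixP => i j; rewrite !mxE.
under eq_bigr => l _ do rewrite !mxE mulr1.
rewrite (sum_ev (fun y => (e (enum_val i) y)%:R)) sum_card -(reg (enum_val i)).
by rewrite card_nb mulr1.
Qed.

Lemma adj_row k : regular e k ->
  (const_mx 1 : 'rV[R]_#|T|) *m adjmx R e = k%:R *: const_mx 1.
Proof.
move=> reg; apply/matrixP => i j; rewrite !mxE.
under eq_bigr => l _ do rewrite !mxE mul1r esym.
rewrite (sum_ev (fun y => (e (enum_val j) y)%:R)) sum_card -(reg (enum_val j)).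
by rewrite card_nb mulr1.
Qed.

Lemma adj_tr : \tr (adjmx R e) = 0.
Proof. by rewrite /mxtrace big1 // => i _; rewrite mxE eirr. Qed.

Lemma regular_root k : regular e k -> (0 < #|T|)%N ->
  root (char_poly (adjmx R e)) k%:R.
Proof.
move=> reg n0; rewrite -eigenvalue_root_char; apply/eigenvalueP.
exists (const_mx 1); first exact: adj_row.
apply/eqP => /matrixP /(_ 0 (Ordinal n0)); rewrite !mxE => /eqP; by rewrite oner_eq0.
Qed.

Lemma adj_sq i j : (adjmx R e *m adjmx R e) i j =
  (ncommon e (enum_val i) (enum_val j))%:R.
Proof.
rewrite !mxE.
under eq_bigr => l _ do rewrite !mxE -natrM mulnb (esym _ (enum_val j)).
rewrite (sum_ev (fun y => (e (enum_val i) y && e (enum_val j) y)%:R)) sum_card.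
by rewrite /ncommon cardsE.
Qed.

Lemma srg_sq v k lam mu : srg e v k lam mu ->
  adjmx R e *m adjmx R e = k%:R%:M + lam%:R *: adjmx R e +
     mu%:R *: (const_mx 1 - 1%:M - adjmx R e).
Proof.
case=> _ _ reg Hl Hm; apply/matrixP => i j; rewrite adj_sq !mxE.
have [->|ij] := eqVneq i j.
  rewrite eirr mulr0 addr0 mulr1n subr0 subrr mulr0 addr0.
  rewrite /ncommon -(reg (enum_val j)); congr (_%:R).
  by apply: eq_card => z; rewrite !inE andbb.
have xy : enum_val i != enum_val j by apply: contra ij => /eqP/enum_val_inj ->.
rewrite mulr0n add0r subr0.
case E: (e (enum_val i) (enum_val j)).
  by rewrite (Hl _ _ xy E) mulr1 subrr mulr0 addr0.
by rewrite (Hm _ _ xy (negbT E)) mulr0 add0r subr0 mulr1.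
Qed.

Lemma srg_eig v k lam mu (th : R) : srg e v k lam mu ->
  root (char_poly (adjmx R e)) th -> th != k%:R ->
  th ^+ 2 = k%:R + lam%:R * th - mu%:R - mu%:R * th.
Proof.
move=> S; have [_ _ reg _ _] := S.
rewrite -eigenvalue_root_char => /eigenvalueP [u uA u0] thk.
set A := adjmx R e in uA *.
set J1 := (const_mx 1 : 'cV[R]_#|T|).
have uJ : u *m J1 = 0.
  have h1 : u *m A *m J1 = th *: (u *m J1) by rewrite uA scalemxAl.
  have h2 : u *m A *m J1 = k%:R *: (u *m J1) by rewrite -mulmxA (adj_col reg) -scalemxAr.
  have : (th - k%:R) *: (u *m J1) = 0 by rewrite scalerBl -h1 -h2 subrr.
  by move/eqP; rewrite scaler_eq0 subr_eq0 (negbTE thk) /= => /eqP.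
have Jdec : (const_mx 1 : 'M[R]_#|T|) = J1 *m (const_mx 1 : 'rV[R]_#|T|).
  apply/matrixP => i j; rewrite !mxE big_ord1 !mxE mulr1 //.
have uAA : u *m (A *m A) = (th ^+ 2) *: u.
  by rewrite mulmxA uA -scalemxAl uA scalerA expr2.
move: uAA; rewrite /A (srg_sq S) -/A !mulmxDr -!scalemxAr !mulmxBr Jdec mulmxA uJ mul0mx.
rewrite uA mul_mx_scalar mulmx1 sub0r => E.
have : (th ^+ 2 - (k%:R + lam%:R * th - mu%:R - mu%:R * th)) *: u = 0.
  rewrite scalerBl -E !scalerBl !scalerDl !scalerA scalerBr scalerN !scalerA.
  by rewrite [X in X - _]addrA subrr.
by move/eqP; rewrite scaler_eq0 (negbTE u0) orbF subr_eq0 => /eqP.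
Qed.
End G.

Section P.
Variable R : rcfType.

Lemma exp_nseq (a : R) m : ('X - a%:P) ^+ m = \prod_(p <- nseq m a) ('X - p%:P).
Proof. by elim: m => [|m IH]; rewrite ?big_nil ?expr0 // exprS big_cons IH. Qed.

Lemma sum_nseq (a : R) m : \sum_(p <- nseq m a) p = a *+ m.
Proof. by elim: m => [|m IH]; rewrite ?big_nil ?mulr0n // big_cons IH mulrS. Qed.

Lemma char_sum n (A : 'M[R]_n) (ps : seq R) :
  char_poly A = \prod_(p <- ps) ('X - p%:P) -> (0 < n)%N ->
  size ps = n /\ \tr A = \sum_(p <- ps) p.
Proof.
move=> E n0.
have sz : size ps = n.
  have := size_char_poly A; rewrite E size_prod_XsubC; by case.
split => //; apply: oppr_inj; rewrite -char_poly_trace // E -sz coefPn_prod_XsubC //.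
by rewrite sz -lt0n.
Qed.
End P.

Section C.
Variable T : finType.
Variable e : rel T.
Hypothesis esym : symmetric e.
Hypothesis eirr : irreflexive e.

Lemma twin K x y : regular e K -> (K <= ncommon e x y)%N ->
  {subset [set z | e x z] <= [set z | e y z]} /\ ~~ e x y.
Proof.
move=> reg le.
have sub : [set z | e x z && e y z] \subset [set z | e x z].
  by apply/subsetP => z; rewrite !inE => /andP [].
have eq : [set z | e x z && e y z] = [set z | e x z].
  by apply/eqP; rewrite eqEcard sub /= reg.
have S : {subset [set z | e x z] <= [set z | e y z]}.
  by move=> z; rewrite -eq !inE => /andP [].
split => //; apply/negP => exy.
have : y \in [set z | e y z] by apply: S; rewrite inE.
by rewrite inE eirr.
Qed.

Lemma clique_lem v k lam mu a b z : srg e v k lam mu -> (k <= lam.+1)%N ->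
  e a z -> e b z -> a != b -> e a b.
Proof.
case=> _ _ reg Hl _ kl az bz ab.
have za : z != a by apply/eqP => zaE; move: az; rewrite zaE eirr.
have sub : [set w | e z w && e a w] \subset [set w | e z w] :\ a.
  apply/subsetP => w; rewrite !inE => /andP [zw aw]; rewrite zw andbT.
  by apply/eqP => wa; move: aw; rewrite wa eirr.
have eq : [set w | e z w && e a w] = [set w | e z w] :\ a.
  apply/eqP; rewrite eqEcard sub /=.
  have := cardsD1 a [set w | e z w]; rewrite inE esym az reg => E.
  have := Hl z a za; rewrite esym az /ncommon => /(_ isT) ->.
  move: kl E; lia.
have : b \in [set w | e z w] :\ a by rewrite !inE eq_sym ab esym bz.
by rewrite -eq inE => /andP [_]; rewrite esym.
Qed.
End C.

Section D.
Variable T : finType.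
Variable e : rel T.
Variable C : {set T}.
Local Notation D := (del_type C).
Local Notation eD := (induced_del e C).

Lemma deg_bound (x : D) :
  (#|[set y | e (val x) y]| <= #|[set y : D | eD x y]| + #|C|)%N.
Proof.
have sub : [set y | e (val x) y] \subset (val @: [set y : D | eD x y] :|: C).
  apply/subsetP => y; rewrite !inE => xy.
  case yC: (y \in C); rewrite ?orbT //.
  have yC' : y \notin C by rewrite yC.
  rewrite orbF; apply/imsetP; exists (exist _ y yC') => //.
  by rewrite inE.
apply: leq_trans (subset_leq_card sub) _.
apply: leq_trans (leq_card_setU _ _) _.
by rewrite leq_add2r leq_imset_card.
Qed.

Lemma ncommon_le (x y : D) :
  (ncommon eD x y <= ncommon e (val x) (val y))%N.
Proof.
rewrite /ncommon -(card_imset _ val_inj); apply: subset_leq_card.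
by apply/subsetP => w /imsetP [z]; rewrite !inE => zz ->.
Qed.
End D.

Lemma root_expP (R : rcfType) (a x : R) m :
  root (('X - a%:P) ^+ m) x -> (0 < m)%N && (x == a).
Proof.
case: m => [|m]; first by rewrite expr0 /root hornerC oner_eq0.
by rewrite root_exp_XsubC.
Qed.

Unset Implicit Arguments.
Theorem mainTheorem7 (R : rcfType) (T : finType) (e : rel T)
  (v k lam mu : nat) (r s : R) (f g : nat) (C : {set T})
  (V K l1 l2 m n : nat) :
  primitive_srg e v k lam mu ->
  k%:R > r -> r > s ->
  char_poly (adjmx R e) =
    ('X - (k%:R)%:P) * ('X - r%:P) ^+ f * ('X - s%:P) ^+ g ->
  coclique e C ->
  (#|C|%:R : R) = v%:R * s / (s - k%:R) ->
  proper_ddg (induced_del e C) V K l1 l2 m n ->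
  (* known facts from the Setting *)
  (forall x : R, root (char_poly (adjmx R (induced_del e C))) x -> x != K%:R ->
     x \in [:: Num.sqrt (K%:R - l1%:R); - Num.sqrt (K%:R - l1%:R);
               Num.sqrt (K%:R ^+ 2 - l2%:R * V%:R);
               - Num.sqrt (K%:R ^+ 2 - l2%:R * V%:R)]) ->
  char_poly (adjmx R (induced_del e C)) =
    ('X - (k%:R + s)%:P) * ('X - r%:P) ^+ (f + 1 - #|C|)
      * ('X - (r + s)%:P) ^+ (#|C| - 1) * ('X - s%:P) ^+ (g - #|C|) ->
  (#|C| < g)%N ->
  ~ (r = Num.sqrt (K%:R ^+ 2 - l2%:R * V%:R) /\
     s = - Num.sqrt (K%:R ^+ 2 - l2%:R * V%:R)).
Proof.
move=> [S conn conncomp] kr rs EG coC Ec [[[esD eiD] cardD regD [ncomp nedge] DP] m1 n1 l12]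
  list ED cg [Er Es].
have S' := S; case: S' => [[es ei] cardT reg Hl Hm].
set eD := induced_del e C in ED list regD ncomp nedge DP esD eiD *.
set c := #|C| in Ec ED cg *.
have sr : s = - r by rewrite Es Er.
rewrite -Er in list; rewrite -Er in Es; rewrite -Es in list.
have r0 : 0 < r by lra.
have [x0 _] : exists x0 : del_type C, true.
  case: (pickP (predT : pred (del_type C))) => [x0 _ | none]; first by exists x0.
  by exfalso; apply: ncomp => x; move: (none x).
have T0 : (0 < #|T|)%N by apply/card_gt0P; exists (val x0).
have D0 : (0 < #|(del_type C : finType)|)%N by apply/card_gt0P; exists x0.
have K0 : (0 < K)%N.
  rewrite lt0n; apply/eqP => K0; apply: nedge => x y; apply/negP => xy.
  have := regD x; rewrite K0 => /eqP; rewrite cards_eq0 => /eqP E.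
  have yin : y \in [set y | eD x y] by rewrite inE.
  by rewrite E inE in yin.
have EG' : char_poly (adjmx R e) =
    \prod_(p <- k%:R :: (nseq f r ++ nseq g s)) ('X - p%:P).
  by rewrite big_cons big_cat /= -!exp_nseq EG mulrA.
have [szG trG] := char_sum EG' T0.
rewrite adj_tr // big_cons big_cat /= !sum_nseq in trG.
have ED' : char_poly (adjmx R eD) =
    \prod_(p <- (k%:R + s) :: (nseq (f + 1 - c) r ++ nseq (c - 1) (r + s) ++ nseq (g - c) s))
       ('X - p%:P).
  by rewrite big_cons !big_cat /= -!exp_nseq ED !mulrA.
have [szD trD] := char_sum ED' D0.
rewrite adj_tr // big_cons !big_cat /= !sum_nseq in trD.
rewrite /= size_cat !size_nseq in szG.
have Ec' : c%:R * (s - k%:R) = v%:R * s.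
  by rewrite Ec divfK //; apply/eqP => h; lra.
have KR : root (char_poly (adjmx R eD)) K%:R := regular_root R esD regD D0.
have rootD : forall x, root (char_poly (adjmx R eD)) x ->
    [|| x == k%:R + s, (0 < f + 1 - c)%N && (x == r),
        (0 < c - 1)%N && (x == r + s) | (0 < g - c)%N && (x == s)].
  move=> x; rewrite ED !rootM root_XsubC.
  by case/orP => [/orP [/orP [->|/root_expP ->]|/root_expP ->]|/root_expP ->];
     rewrite ?orbT.
have K0R : (0 : R) < K%:R by rewrite ltr0n.
rewrite -[r *+ _]mulr_natr -[s *+ _]mulr_natr in trG.
rewrite -[r *+ _]mulr_natr -[s *+ _]mulr_natr -[(r + s) *+ _]mulr_natr in trD.
have [c0 | [c1 | c2]] : c = 0%N \/ c = 1%N \/ (1 < c)%N by clear; case: c => [|[|c]]; auto.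
- move: Ec'; rewrite c0 mul0r => /esym/eqP; rewrite mulf_eq0 pnatr_eq0.
  case/orP => [/eqP v0|/eqP s0]; last by lra.
  by move: T0; rewrite cardT v0.
- have vR : v%:R = 1 + f%:R + g%:R :> R.
    by rewrite -cardT -szG -addn1 !natrD; lra.
  rewrite c1 mul1r sr vR in Ec'; rewrite sr in trG.
  have : f%:R * r = 0 :> R by nra.
  move/eqP; rewrite mulf_eq0 (gt_eqF r0) orbF pnatr_eq0 => /eqP f0.
  have KK : K%:R = k%:R - r :> R.
    move/rootD: KR; rewrite f0 c1 /= => /orP [/eqP ->|]; first by rewrite sr.
    by case/andP => _ /eqP h; lra.
  have db := deg_bound e x0; rewrite reg regD -/c c1 in db.
  have Kk : (K < k)%N by rewrite -(ltr_nat R) KK; lra.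
  have kK : k = K.+1 by clear -db Kk; lia.
  have r1 : r = 1 by move: KK; rewrite kK -natr1; lra.
  rewrite r1 f0 mulr0n addr0 in Ec'; rewrite f0 mulr0n addr0 in vR.
  have vk : v = k.+1.
    apply/eqP; rewrite -(eqr_nat R) -natr1; apply/eqP; lra.
  have comp : forall x y, x != y -> e x y.
    move=> x y xy.
    have : [set z | e x z] = [set~ x].
      apply/eqP; rewrite eqEcard cardsC1 reg cardT vk leqnn andbT.
      apply/subsetP => z; rewrite !inE => xz; apply/eqP => zx.
      by move: xz; rewrite zx ei.
    by move/setP/(_ y); rewrite !inE eq_sym xy.
  have [y xy] : exists y, y \in [set z | e (val x0) z].
    by apply/card_gt0P; rewrite reg kK.
  rewrite inE in xy.
  have := conncomp (val x0) y; case/connectP => p.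
  case: p => [_ yE|a p /andP [h _] _].
    by move: xy; rewrite yE ei.
  move: h; rewrite /compl_rel => /andP [xa].
  by rewrite comp.
have cR : (1 : R) < c%:R by rewrite ltr1n.
have Z0 : root (char_poly (adjmx R eD)) 0.
  rewrite ED !rootM; apply/orP; left; apply/orP; right.
  have -> : (c - 1 = (c - 2).+1)%N by clear -c2; lia.
  by rewrite root_exp_XsubC sr subrr.
have sq0 : Num.sqrt (K%:R - l1%:R) = 0 :> R.
  have := list 0 Z0; rewrite eq_sym lt0r_neq0 // => /(_ isT).
  rewrite !inE => /or4P [/eqP <-|/eqP h|/eqP h|/eqP h] //.
  - by apply/eqP; rewrite -oppr_eq0 -h.
  - lra.
  - lra.
have Kl1 : (K <= l1)%N.
  by move/eqP: sq0; rewrite sqrtr_eq0 subr_le0 ler_nat.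
have KK : K%:R = k%:R - r :> R.
  have kr0 : root (char_poly (adjmx R eD)) (k%:R + s).
    by rewrite ED !rootM root_XsubC eqxx.
  have h1 : (k%:R + s == K%:R) || (k%:R - r == r).
    case: eqP => //= hne; have := list _ kr0 (introN eqP hne).
    rewrite !inE sq0 oppr0 sr => /or4P [/eqP h|/eqP h|/eqP h|/eqP h].
    - lra.
    - lra.
    - by apply/eqP.
    - lra.
  move/rootD: KR => /or4P [/eqP h|/andP [_ /eqP h]|/andP [_ /eqP h]|/andP [_ /eqP h]].
  - by rewrite h sr.
  - by case/orP: h1 => /eqP h2; lra.
  - lra.
  - lra.
have f1 : (0 < f)%N.
  rewrite lt0n; apply/eqP => f0; move: trG trD; rewrite f0 add0n.
  have -> : (1 - c = 0)%N by clear -c2; lia.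
  rewrite (natrB _ (ltnW cg)) sr addrN => h1 h2.
  have : r * c%:R - r = 0 by lra.
  nra.
have rG : root (char_poly (adjmx R e)) r.
  rewrite EG !rootM; apply/orP; left; apply/orP; right.
  by rewrite -(prednK f1) root_exp_XsubC.
have sG : root (char_poly (adjmx R e)) s.
  rewrite EG !rootM; apply/orP; right.
  have g1 : (0 < g)%N by clear -cg; lia.
  by rewrite -(prednK g1) root_exp_XsubC.
have rk : r != k%:R by apply/eqP => h; lra.
have sk : s != k%:R by apply/eqP => h; lra.
have e1 := srg_eig es ei S rG rk.
have e2 := srg_eig es ei S sG sk.
rewrite sr in e2.
have lamu : lam = mu.
  apply/eqP; rewrite -(eqr_nat R); apply/eqP.
  have : (lam%:R - mu%:R) * r = 0 :> R by nra.
  by move/eqP; rewrite mulf_eq0 (gt_eqF r0) orbF subr_eq0 => /eqP.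
have muE : mu%:R = k%:R - r ^+ 2 :> R by rewrite lamu in e1; lra.
case: DP => P [partP cardP blkP ncomP].
case/and3P: partP => /eqP covP triv _.
set B := pblock P x0.
have Bin : B \in P by apply: pblock_mem; rewrite covP inE.
have x0B : x0 \in B by rewrite mem_pblock covP inE.
have cB := blkP B Bin.
have B1 : (1 < #|B|)%N.
  have : (0 < #|B|)%N by apply/card_gt0P; exists x0.
  by rewrite cB; clear -n1; lia.
have [y yB] : exists y, y \in B :\ x0.
  apply/card_gt0P; move: B1; rewrite (cardsD1 x0 B) x0B; clear; lia.
move: yB; rewrite !inE => /andP [yx0 yB].
have pby : pblock P y = B by apply: def_pblock.
have x0y : x0 != y by rewrite eq_sym.
have [nc1 _] := ncomP x0 y x0y.
have ncl : ncommon eD x0 y = l1 by apply: nc1; rewrite pby.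
have Kn : (K <= ncommon eD x0 y)%N by rewrite ncl.
have [sub nadj] := twin eiD regD Kn.
have vxy : val x0 != val y by apply: contra yx0 => /eqP/val_inj ->.
have Kmu : (K <= mu)%N.
  rewrite -(Hm _ _ vxy nadj); apply: leq_trans Kn _; exact: ncommon_le.
have klam : (k <= lam.+1)%N.
  have : (K%:R : R) <= mu%:R by rewrite ler_nat.
  rewrite KK muE => h.
  have r1 : r <= 1 by nra.
  have : (k%:R : R) <= (lam.+1)%:R by rewrite -natr1 lamu; lra.
  by rewrite ler_nat.
have [z xz] : exists z, z \in [set z | eD x0 z].
  by apply/card_gt0P; rewrite regD.
have yz : z \in [set z | eD y z] by apply: sub.
rewrite !inE in xz yz.
move/negP: nadj => nadj; apply: nadj.
exact: (clique_lem es ei S klam xz yz vxy).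
Qed.
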